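(* Let $\mu$ be a finite measure on $\mathbb{N}_+$ with $\mu(n)\sim b(\log n)^\alpha n^{-2}$ as $n\to\infty$ for constants $b>0,\alpha>0$. Then as $n\to\infty$, $$\mathcal{L}^f\Big(\frac{1}{\log\log(\cdot+10)}\Big)(n)\le-\frac{\Phi_\mu(n)}{(n+10)\log(n+10)(\log\log(n+10))^2}-\Big(2\log2-\frac12\Big)\frac{b(\log n)^{\alpha-1}}{(\log\log n)^2}+o\Big(\frac{(\log n)^{\alpha-1}}{(\log\log n)^2}\Big).$$
   Context: $\mathbb{N}_+=\{1,2,\dots\}$, $\mu(k):=\mu(\{k\})$, $\Phi_\mu(n)=n\sum_{k=1}^n k\mu(k)$. For $g:\mathbb{N}_+\to\mathbb{R}$ with $\sum_k|g(n+k)|\mu(k)<\infty$, the fragmentation operator is $\mathcal{L}^fg(n)=n\sum_{k=1}^\infty\mu(k)[g(n+k)-g(n)]$; here it is applied to $g(n)=1/\log\log(n+10)$. *)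

(* Defs.v *)
From Stdlib Require Export Reals Lra.
From Coquelicot Require Export Coquelicot.
Open Scope R_scope.

(* A finite measure on N_+ is represented by its point masses mu k, k >= 1
   (the value mu 0 is never used). *)
Definition finite_measure_Npos (mu : nat -> R) : Prop :=
  (forall k, (1 <= k)%nat -> 0 <= mu k) /\ ex_series (fun k => mu (S k)).

Definition g_loglog (n : nat) : R := / ln (ln (INR n + 10)).

Definition Lf (mu : nat -> R) (g : nat -> R) (n : nat) : R :=
  INR n * Series (fun k => mu (S k) * (g (n + S k)%nat - g n)).

(* Phi_mu(n) = n * sum_{k=1}^n k mu(k)  (the k = 0 term is 0 * mu 0 = 0) *)
Definition Phi (mu : nat -> R) (n : nat) : R :=
  INR n * sum_f_R0 (fun k => INR k * mu k) n.

(* Main.v *)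
Require Import Defs.
From Stdlib Require Import Reals Lra Lia.
From Coquelicot Require Import Coquelicot.
Open Scope R_scope.


Lemma ln1p_le z : -1 < z -> ln (1 + z) <= z.
Proof.
  intros Hz. rewrite <- (ln_exp z) at 2. apply ln_le. lra.
  pose proof (exp_ineq1_le z). lra.
Qed.

Lemma ln_ge_inv y : 0 < y -> 1 - / y <= ln y.
Proof.
  intros Hy. assert (H := ln1p_le (/ y - 1)).
  assert (0 < / y) by (apply Rinv_0_lt_compat; lra).
  replace (1 + (/ y - 1)) with (/ y) in H by ring.
  rewrite ln_Rinv in H by lra. lra.
Qed.

Lemma ln1p_ge2 s : 0 <= s -> 2 * s / (2 + s) <= ln (1 + s).
Proof.
  intros Hs. destruct (Req_dec s 0) as [->|Hs0].
  { replace (1+0) with 1 by ring. rewrite ln_1. unfold Rdiv. lra. }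
  set (f := fun x => ln (1 + x) - 2 * x / (2 + x)).
  set (df := fun x => / (1 + x) - 4 / (2 + x) ^ 2).
  destruct (MVT_cor2 f df 0 s) as [c [Hc1 Hc2]]. lra.
  { intros c Hc. apply is_derive_Reals. unfold f, df.
    auto_derive. lra. field. lra. }
  assert (f 0 = 0) as F0.
  { unfold f. replace (1+0) with 1 by ring. rewrite ln_1. unfold Rdiv. ring. }
  assert (0 <= df c).
  { unfold df. replace (/ (1 + c) - 4 / (2 + c) ^ 2) with (c^2 / ((1+c)*(2+c)^2)) by (field; lra).
    apply Rmult_le_pos. nra. left. apply Rinv_0_lt_compat. nra. }
  assert (0 <= f s) by nra.
  unfold f in *. lra.
Qed.

Lemma ln_nonpos x : x <= 1 -> ln x <= 0.
Proof.
  intros H. destruct (Rle_lt_dec x 0) as [h|h].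
  - unfold ln. destruct (Rlt_dec 0 x) as [r|r]; [exfalso; lra | apply Rle_refl].
  - rewrite <- ln_1. apply ln_le; lra.
Qed.


Lemma dterm a x : 0 < a -> 1 <= ln (ln a) -> 0 <= x ->
  / ln (ln (a + x)) - / ln (ln a) <=
  - (ln (1 + x / a) - 2 * ln (1 + x / a) ^ 2 / ln a) / (ln a * ln (ln a) ^ 2).
Proof.
  intros Ha Hl Hx.
  set (L := ln a). set (l := ln L). set (u := ln (1 + x / a)).
  assert (Hl1 : 1 <= ln (ln a)) by exact Hl.
  assert (HL : 1 < L).
  { destruct (Rle_lt_dec L 1) as [h|h]; auto.
    exfalso. assert (l <= 0) by (unfold l; apply ln_nonpos; lra).
    assert (1 <= l) by exact Hl. lra. }
  assert (Hxa : 0 <= x / a) by (apply Rdiv_le_0_compat; lra).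
  assert (Hu : 0 <= u). { unfold u. rewrite <- ln_1. apply ln_le; lra. }
  assert (E1 : ln (a + x) = L + u).
  { unfold L, u. rewrite <- ln_mult by lra. f_equal. field. lra. }
  set (v := ln (1 + u / L)).
  assert (E2 : ln (L + u) = l + v).
  { assert (0 <= u / L) by (apply Rdiv_le_0_compat; lra).
    unfold l, v. rewrite <- ln_mult by lra.
    f_equal. field. lra. }
  rewrite E1, E2. fold L l.
  assert (Hv : u / (L + u) <= v).
  { unfold v. pose proof (ln_ge_inv (1 + u / L)).
    assert (0 <= u / L) by (apply Rdiv_le_0_compat; lra).
    replace (u / (L+u)) with (1 - / (1 + u/L)) by (field; lra). apply H; lra. }
  set (w := u / (L + u)).
  assert (Hw : 0 <= w) by (apply Rdiv_le_0_compat; lra).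
  assert (Hl0 : 0 < l) by (assert (1 <= l) by exact Hl; lra).
  assert (Hl2 : 1 <= l) by exact Hl.
  assert (K1 : w * (L * l - u + 2 * u ^ 2 / L) >= l * (u - 2 * u ^ 2 / L)).
  { unfold w. apply Rle_ge.
    replace (u / (L + u) * (L * l - u + 2 * u ^ 2 / L)) with (u * (L*L*l - u * L + 2*u^2) / (L * (L+u))) by (field; lra).
    replace (l * (u - 2 * u ^ 2 / L)) with (l * (u * L - 2 * u^2) * (L + u) / (L * (L+u))) by (field; lra).
    apply Rmult_le_compat_r. left. apply Rinv_0_lt_compat. nra.
    assert (0 <= u * L * (l - 1) + 2 * u^2 * (1 + l)) by (apply Rplus_le_le_0_compat; apply Rmult_le_pos; nra).
    nra. }
  assert (Q : 0 < L * l - u + 2 * u ^ 2 / L).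
  { replace (L * l - u + 2 * u ^ 2 / L) with ((2*(u - L/4)^2 + L^2*(l - 1/8)) / L) by (field; lra).
    apply Rdiv_lt_0_compat; [|lra]. assert (0 < L^2*(l-1/8)) by (apply Rmult_lt_0_compat; nra). assert (0 <= (u - L/4)^2) by apply pow2_ge_0. lra. }
  assert (K2 : v * (L * l - u + 2 * u ^ 2 / L) >= l * (u - 2 * u ^ 2 / L)).
  { assert (w * (L * l - u + 2 * u ^ 2 / L) <= v * (L * l - u + 2 * u ^ 2 / L)) by (apply Rmult_le_compat_r; [left; exact Q | exact Hv]). lra. }
  assert (Hv0 : 0 <= v) by (apply Rle_trans with w; [exact Hw| exact Hv]).
  replace (/ (l + v) - / l) with (- v / (l * (l + v))) by (field; lra).
  apply (Rmult_le_reg_r (L * l ^ 2 * (l + v))). apply Rmult_lt_0_compat; nra.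
  replace (- v / (l * (l + v)) * (L * l ^ 2 * (l + v))) with (- (L * l * v)) by (field; lra).
  replace (- (u - 2 * u ^ 2 / L) / (L * l ^ 2) * (L * l ^ 2 * (l + v))) with (- ((u - 2 * u ^ 2 / L) * (l+v))) by (field; lra).
  nra.
Qed.


Lemma Series_nonpos (t : nat -> R) : ex_series t -> (forall k, t k <= 0) -> Series t <= 0.
Proof.
  intros He Ht.
  assert (H := Series_le (fun k => 0 * t k) (fun k => - t k)).
  rewrite Series_scal_l, Series_opp in H.
  assert (0 * Series t <= - Series t). apply H. intros k. specialize (Ht k). lra.
  apply (ex_series_opp t) in He. exact He.
  lra.
Qed.

Lemma Series_le_partial (t : nat -> R) m : ex_series t -> (forall k, t k <= 0) ->
  Series t <= sum_f_R0 t m.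
Proof.
  intros He Ht. rewrite (Series_incr_n t (S m)) by (auto; lia). simpl pred.
  assert (Series (fun k => t (S m + k)%nat) <= 0).
  { apply Series_nonpos. apply (ex_series_incr_n t (S m)). exact He. intros; apply Ht. }
  lra.
Qed.

Lemma partial_le_Series (t : nat -> R) m : ex_series t -> (forall k, 0 <= t k) ->
  sum_f_R0 t m <= Series t.
Proof.
  intros He Ht. assert (H := Series_le_partial (fun k => - t k) m).
  rewrite Series_opp in H.
  assert (E : sum_f_R0 (fun k => - t k) m = - sum_f_R0 t m).
  { clear H. induction m; simpl; [reflexivity| rewrite IHm; ring]. }
  rewrite E in H. assert (- Series t <= - sum_f_R0 t m); [|lra].
  apply H. apply (ex_series_opp t) in He. exact He. intros k; specialize (Ht k); lra.
Qed.

Lemma sum_inv_ln y m : 0 < y ->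
  sum_f_R0 (fun i => / (y + INR (S i))) m <= ln (y + INR (S m)) - ln y.
Proof.
  intros Hy. induction m.
  - simpl. replace (y + 1) with (y * (1 + /y)) by (field; lra).
    assert (0 < /y) by (apply Rinv_0_lt_compat; lra).
    rewrite ln_mult by lra.
    assert (H0 := ln_ge_inv (1 + /y)).
    replace (1 - / (1 + / y)) with (/ (y*(1+/y))) in H0 by (field; lra).
    assert (/ (y*(1+/y)) <= ln (1 + / y)) by (apply H0; lra).
    lra.
  - change (sum_f_R0 ?f (S m)) with (sum_f_R0 f m + f (S m)). cbv beta.
    assert (Hp : 0 < y + INR (S m)) by (pose proof (pos_INR (S m)); lra).
    set (z := y + INR (S m)) in *.
    replace (y + INR (S (S m))) with (z + 1) by (unfold z; rewrite (S_INR (S m)); ring).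
    assert (/ (z + 1) <= ln (z + 1) - ln z).
    { replace (z + 1) with (z * (1 + /z)) by (field; lra).
      assert (0 < /z) by (apply Rinv_0_lt_compat; lra).
      rewrite ln_mult by lra.
      assert (H9 := ln_ge_inv (1 + /z)).
      replace (1 - / (1 + / z)) with (/ (z*(1+/z))) in H9 by (field; lra).
      assert (0 < /z) by (apply Rinv_0_lt_compat; lra).
      assert (/ (z * (1 + / z)) <= ln (1 + / z)) by (apply H9; lra). lra. }
    lra.
Qed.

Lemma ln2_lt_1 : ln 2 < 1.
Proof.
  rewrite <- ln_exp with 1. apply ln_increasing. lra.
  pose proof (exp_ineq1 1). lra.
Qed.

Lemma ln32_le : ln (3/2) <= 45/100.
Proof.
  rewrite <- (ln_exp (45/100)). apply ln_le. lra.
  replace (45/100) with (225/1000 + 225/1000) by field. rewrite exp_plus.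
  pose proof (exp_ineq1_le (225/1000)). nra.
Qed.

Lemma ln1025_le : ln 1025 <= 11.
Proof.
  apply Rle_trans with (ln (2^11)). apply ln_le; lra.
  rewrite ln_pow by lra. pose proof ln2_lt_1. simpl INR. lra.
Qed.


Definition Fa (a x : R) := ln (1 + x / a) / x + / a * ln (1 + a / x).

Lemma Fstep a x : 0 < a -> 2 <= x ->
  Fa a (x - 1) - Fa a x <= ln (1 + x / a) / (x * (x - 1)).
Proof.
  intros Ha Hx. unfold Fa.
  set (u' := ln (1 + (x - 1) / a)). set (u := ln (1 + x / a)).
  assert (Hxa : 0 < x / a) by (apply Rdiv_lt_0_compat; lra).
  assert (Hxa' : 0 < (x - 1) / a) by (apply Rdiv_lt_0_compat; lra).
  assert (Hq : 0 < (a + x) / (a + x - 1)) by (apply Rdiv_lt_0_compat; lra).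
  assert (E1 : u = u' + ln ((a + x) / (a + x - 1))).
  { unfold u, u'. rewrite <- ln_mult by lra. f_equal. field. lra. }
  assert (E2 : 1 / (a + x) <= ln ((a + x) / (a + x - 1))).
  { assert (H := ln_ge_inv ((a + x) / (a + x - 1)) Hq).
    replace (1 - / ((a + x) / (a + x - 1))) with (1 / (a + x)) in H by (field; lra). exact H. }
  assert (Hz : 0 < a / ((x - 1) * (x + a))) by (apply Rdiv_lt_0_compat; nra).
  assert (Hax : 0 < a / x) by (apply Rdiv_lt_0_compat; lra).
  assert (E3 : ln (1 + a / (x - 1)) = ln (1 + a / x) + ln (1 + a / ((x - 1) * (x + a)))).
  { rewrite <- ln_mult by lra. f_equal. field. lra. }
  assert (E4 : ln (1 + a / ((x - 1) * (x + a))) <= a / ((x - 1) * (x + a))) by (apply ln1p_le; lra).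
  rewrite E3.
  assert (S1 : / a * (ln (1 + a / x) + ln (1 + a / ((x - 1) * (x + a)))) - / a * ln (1 + a / x)
     <= 1 / ((x - 1) * (x + a))).
  { replace (1 / ((x - 1) * (x + a))) with (/ a * (a / ((x - 1) * (x + a)))) by (field; lra).
    assert (0 < / a) by (apply Rinv_0_lt_compat; lra).
    assert (/ a * ln (1 + a / ((x - 1) * (x + a))) <= / a * (a / ((x - 1) * (x + a)))) by (apply Rmult_le_compat_l; lra).
    lra. }
  assert (S2 : u' / (x - 1) - u / x + 1 / ((x - 1) * (x + a)) <= u / (x * (x - 1))).
  { apply (Rmult_le_reg_r (x * (x - 1))). nra.
    replace ((u' / (x - 1) - u / x + 1 / ((x - 1) * (x + a))) * (x * (x - 1))) with
      (u' * x - u * (x - 1) + x / (x + a)) by (field; lra).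
    replace (u / (x * (x - 1)) * (x * (x - 1))) with u by (field; lra).
    replace (x / (x + a)) with (x * (1 / (a + x))) by (field; lra).
    assert (x * (1 / (a + x)) <= x * ln ((a + x) / (a + x - 1))) by (apply Rmult_le_compat_l; lra).
    rewrite E1. nra. }
  lra.
Qed.

Lemma term_lb a nr x : 0 < a -> 1 <= nr -> nr + 1 <= x ->
  nr / (nr + 1) * (Fa a (x - 1) - Fa a x) <= ln (1 + x / a) / x ^ 2.
Proof.
  intros Ha Hn Hx.
  assert (H := Fstep a x Ha ltac:(lra)).
  assert (Hu : 0 <= ln (1 + x / a)).
  { rewrite <- ln_1. apply ln_le. lra. assert (0 < x / a) by (apply Rdiv_lt_0_compat; lra). lra. }
  set (u := ln (1 + x / a)) in *.
  set (Y := u / (x * (x - 1))).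
  assert (HY : 0 <= Y) by (apply Rdiv_le_0_compat; nra).
  assert (E : u / x ^ 2 = Y * ((x - 1) / x)) by (unfold Y; field; lra).
  rewrite E.
  assert (Hr : nr / (nr + 1) <= (x - 1) / x).
  { apply (Rmult_le_reg_r ((nr + 1) * x)). nra.
    replace (nr / (nr + 1) * ((nr + 1) * x)) with (nr * x) by (field; lra).
    replace ((x - 1) / x * ((nr + 1) * x)) with ((x - 1) * (nr + 1)) by (field; lra). nra. }
  assert (Hr0 : 0 <= nr / (nr + 1)) by (apply Rdiv_le_0_compat; lra).
  assert (nr / (nr + 1) * (Fa a (x - 1) - Fa a x) <= nr / (nr + 1) * Y) by (apply Rmult_le_compat_l; [exact Hr0 | exact H]).
  assert (Y * (nr / (nr + 1)) <= Y * ((x - 1) / x)) by (apply Rmult_le_compat_l; lra).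
  lra.
Qed.

Lemma sum_lb a nr m : 0 < a -> 1 <= nr ->
  nr / (nr + 1) * (Fa a nr - Fa a (nr + 1 + INR m)) <=
  sum_f_R0 (fun i => ln (1 + (nr + 1 + INR i) / a) / (nr + 1 + INR i) ^ 2) m.
Proof.
  intros Ha Hn. induction m.
  - simpl. assert (H := term_lb a nr (nr + 1 + 0) Ha Hn ltac:(lra)).
    replace (nr + 1 + 0 - 1) with nr in H by ring. exact H.
  - change (sum_f_R0 ?f (S m)) with (sum_f_R0 f m + f (S m)). cbv beta.
    pose proof (pos_INR m). pose proof (pos_INR (S m)).
    assert (HT := term_lb a nr (nr + 1 + INR (S m)) Ha Hn ltac:(lra)).
    rewrite S_INR in *.
    replace (nr + 1 + (INR m + 1) - 1) with (nr + 1 + INR m) in HT by ring.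
    assert (E : nr / (nr + 1) * (Fa a nr - Fa a (nr + 1 + (INR m + 1))) =
      nr / (nr + 1) * (Fa a nr - Fa a (nr + 1 + INR m)) +
      nr / (nr + 1) * (Fa a (nr + 1 + INR m) - Fa a (nr + 1 + (INR m + 1)))) by ring.
    rewrite E. lra.
Qed.


Lemma final_ineq (nr a L l Ln lam P b K0M Fn FK ln2 : R) :
  10000000 <= nr -> a = nr + 10 -> 2048000 <= L -> 0 < Ln -> L <= (1 + 1/1000) * Ln ->
  1 <= lam -> 1 <= l -> l <= (1 + 1/1000) * lam -> 1 <= P -> 0 < b ->
  0 <= K0M -> K0M <= 1/1000 * b * a ->
  2 * (ln2 - 10 / nr) / a <= Fn -> FK <= 12 / (1024 * nr) ->
  1/2 < ln2 -> ln2 < 1 ->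
  nr / (L * l ^ 2) *
   ((1 + 6 / L) * (K0M / a ^ 2 + (1 + 1/1000) * b * P / a * (45/100))
    - (1 - 2048 / L) * (1 - 1/1000) * b * P * (nr / (nr + 1)) * (Fn - FK))
  <= - (2 * ln2 - 1/2) * b * P / Ln / lam ^ 2.
Proof.
  intros Hn Ha HL HLn HLL Hlam Hl Hll HP Hb HK0 HK0' HFn HFK H2a H2b.
  assert (Ha0 : 0 < a) by lra.
  set (W := b * P / a).
  assert (HW : 0 < W) by (unfold W; apply Rdiv_lt_0_compat; nra).
  assert (A1 : 6 / L <= (1/1000)) by (apply (Rmult_le_reg_r L); [lra|]; field_simplify; lra).
  assert (A2 : K0M / a ^ 2 <= (1/1000) * W).
  { unfold W. apply (Rmult_le_reg_r (a^2)). nra.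
    replace (K0M / a ^ 2 * a ^ 2) with K0M by (field; lra).
    replace ((1/1000) * (b * P / a) * a ^ 2) with ((1/1000) * b * a * P) by (field; lra).
    assert (1/1000 * b * a <= 1/1000 * b * a * P) by (rewrite <- (Rmult_1_r (1/1000*b*a)) at 1; apply Rmult_le_compat_l; nra). lra. }
  assert (A3 : 0 <= K0M / a ^ 2) by (apply Rdiv_le_0_compat; nra).
  assert (A4 : (1 + 1/1000) * b * P / a * (45/100) = (1 + 1/1000) * (45/100) * W) by (unfold W; field; lra).
  rewrite A4.
  set (X1 := K0M / a ^ 2 + (1 + 1/1000) * (45/100) * W) in *.
  assert (AX : 0 <= X1 <= ((1/1000) + (1 + 1/1000) * (45/100)) * W) by (unfold X1; nra).
  assert (AA : (1 + 6 / L) * X1 <= (1 + (1/1000)) * (((1/1000) + (1 + 1/1000) * (45/100)) * W)).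
  { assert (0 <= 6 / L) by (apply Rdiv_le_0_compat; lra).
    apply Rmult_le_compat; lra. }
  assert (B1 : 1 - (1/1000) <= 1 - 2048 / L) by (assert (2048 / L <= 1/1000) by (apply (Rmult_le_reg_r L); [lra|]; field_simplify; lra); lra).
  assert (B2 : 1 - (1/1000) <= nr / (nr + 1)).
  { apply (Rmult_le_reg_r (nr + 1)). lra. replace (nr / (nr + 1) * (nr + 1)) with nr by (field; lra). lra. }
  assert (B3 : (2 * ln2 - 118/10000) / a <= Fn - FK).
  { assert (10 / nr <= 1/1000000) by (apply (Rmult_le_reg_r nr); [lra|]; field_simplify; lra).
    assert (FK * a <= 1173 / 100000).
    { apply Rle_trans with (12 / (1024 * nr) * a). apply Rmult_le_compat_r; lra.
      rewrite Ha. apply (Rmult_le_reg_r (1024 * nr)). lra. field_simplify; lra. }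
    assert (2 * (ln2 - 10 / nr) <= Fn * a).
    { apply (Rmult_le_reg_r (/ a)). apply Rinv_0_lt_compat; lra.
      replace (Fn * a * / a) with Fn by (field; lra). exact HFn. }
    apply (Rmult_le_reg_r a). lra. replace ((2 * ln2 - 118 / 10000) / a * a) with (2 * ln2 - 118 / 10000) by (field; lra).
    lra. }
  assert (B4 : (2 * ln2 - 118/10000) / a * (b * P) = (2 * ln2 - 118/10000) * W) by (unfold W; field; lra).
  set (V := (1 - 2048 / L) * (1 - 1 / 1000) * b * P * (nr / (nr + 1)) * (Fn - FK)).
  assert (BB : (1 - (1/1000)) * (1 - (1/1000)) * (1 - 1/1000) * ((2 * ln2 - 118/10000) * W) <= V).
  { unfold V. rewrite <- B4.
    assert (0 <= (2 * ln2 - 118 / 10000) / a * (b * P)) by (rewrite B4; nra).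
    assert (0 <= (2 * ln2 - 118 / 10000) / a) by (apply Rdiv_le_0_compat; lra).
    assert (0 <= b * P) by nra.
    replace ((1 - 2048 / L) * (1 - 1 / 1000) * b * P * (nr / (nr + 1)) * (Fn - FK)) with
      ((1 - 2048 / L) * (nr / (nr + 1)) * ((1 - 1 / 1000) * ((Fn - FK) * (b * P)))) by ring.
    replace ((1 - (1/1000)) * (1 - (1/1000)) * (1 - 1 / 1000) * ((2 * ln2 - 118 / 10000) / a * (b * P))) with
      ((1 - (1/1000)) * (1 - (1/1000)) * ((1 - 1 / 1000) * ((2 * ln2 - 118 / 10000) / a * (b * P)))) by ring.
    assert (((2 * ln2 - 118 / 10000) / a * (b * P)) <= (Fn - FK) * (b * P)) by (apply Rmult_le_compat_r; lra).
    apply Rmult_le_compat. nra. nra.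
    apply Rmult_le_compat; lra. lra. }
  set (c := 2 * ln2 - 1/2).
  assert (Hc : 0 < c) by (unfold c; lra).
  assert (BR : (1 + 6 / L) * X1 - V <= - c * (1 + (1/1000)) ^ 4 * W).
  { assert (Hpoly : (1 + (1/1000)) * ((1/1000) + (1 + 1/1000) * (45/100)) - (1 - (1/1000)) * (1 - (1/1000)) * (1 - 1/1000) * (2 * ln2 - 118/10000) <= - c * (1 + (1/1000)) ^ 4)
      by (unfold c; lra).
    assert (Hpoly2 : ((1 + (1/1000)) * ((1/1000) + (1 + 1/1000) * (45/100)) - (1 - (1/1000)) * (1 - (1/1000)) * (1 - 1/1000) * (2 * ln2 - 118/10000)) * W <= - c * (1 + (1/1000)) ^ 4 * W)
      by (apply Rmult_le_compat_r; lra).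
    lra. }
  assert (HL0 : 0 < L) by lra.
  assert (C0 : 0 < nr / (L * l ^ 2)) by (apply Rdiv_lt_0_compat; nra).
  apply Rle_trans with (nr / (L * l ^ 2) * (- c * (1 + (1/1000)) ^ 4 * W)).
  { apply Rmult_le_compat_l; lra. }
  unfold W.
  assert (C1 : a * L * l ^ 2 <= (1 + (1/1000)) ^ 4 * nr * Ln * lam ^ 2).
  { assert (a <= (1 + (1/1000)) * nr) by (lra).
    assert (l ^ 2 <= ((1 + (1/1000)) * lam) ^ 2) by (apply pow_incr; lra).
    replace ((1 + (1/1000)) ^ 4 * nr * Ln * lam ^ 2) with (((1 + (1/1000)) * nr) * ((1 + (1/1000)) * Ln) * (((1 + (1/1000)) * lam) ^ 2)) by ring.
    apply Rmult_le_compat. nra. nra. apply Rmult_le_compat; lra. lra. }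
  assert (Hlam0 : 0 < lam ^ 2) by nra.
  assert (Nz1 : Ln <> 0) by lra. assert (Nz2 : lam <> 0) by lra. assert (Nz3 : a <> 0) by lra.
  assert (Nz4 : L <> 0) by lra. assert (Nz5 : l <> 0) by lra.
  assert (Pz1 : 0 < Ln * lam ^ 2) by (apply Rmult_lt_0_compat; lra).
  assert (Pz2 : 0 < a * L * l ^ 2) by (apply Rmult_lt_0_compat; [apply Rmult_lt_0_compat|]; nra).
  assert (HbP : 0 < b * P) by nra.
  replace (nr / (L * l ^ 2) * (- c * (1 + (1/1000)) ^ 4 * (b * P / a))) with
    (- (c * (b * P)) * ((1 + (1/1000)) ^ 4 * nr / (a * L * l ^ 2))) by (field; repeat split; auto).
  replace (- c * b * P / Ln / lam ^ 2) with (- (c * (b * P)) * (1 / (Ln * lam ^ 2))) by (field; repeat split; auto).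
  assert (1 / (Ln * lam ^ 2) <= (1 + (1/1000)) ^ 4 * nr / (a * L * l ^ 2)).
  { apply (Rmult_le_reg_r ((Ln * lam ^ 2) * (a * L * l ^ 2))). apply Rmult_lt_0_compat; assumption.
    replace (1 / (Ln * lam ^ 2) * (Ln * lam ^ 2 * (a * L * l ^ 2))) with (a * L * l ^ 2) by (field; repeat split; auto).
    replace ((1 + (1/1000)) ^ 4 * nr / (a * L * l ^ 2) * (Ln * lam ^ 2 * (a * L * l ^ 2))) with ((1 + (1/1000)) ^ 4 * nr * Ln * lam ^ 2) by (field; repeat split; auto).
    exact C1. }
  assert (0 < c * (b * P)) by nra.
  nra.
Qed.


Lemma lnln_pos x : 10 <= x -> 0 < ln (ln x).
Proof.
  intros Hx. assert (1 < ln x).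
  { rewrite <- (ln_exp 1). apply ln_increasing. apply exp_pos. pose proof exp_le_3. lra. }
  rewrite <- ln_1. apply ln_increasing; lra.
Qed.

Lemma g_mono x y : 10 <= x <= y -> / ln (ln y) <= / ln (ln x).
Proof.
  intros H. assert (Hx := lnln_pos x ltac:(lra)).
  apply Rinv_le_contravar. exact Hx.
  apply ln_le. assert (1 < ln x).
  { rewrite <- (ln_exp 1). apply ln_increasing. apply exp_pos. pose proof exp_le_3. lra. }
  lra. apply ln_le; lra.
Qed.

Lemma nat_large X : exists N : nat, X < INR N.
Proof.
  destruct (nfloor_ex (Rmax X 0) (Rmax_r X 0)) as [m Hm].
  exists (S m). rewrite S_INR. pose proof (Rmax_l X 0). lra.
Qed.

Lemma mu_pos_sum (mu : nat -> R) m : (forall k, (1 <= k)%nat -> 0 <= mu k) ->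
  ex_series (fun k => mu (S k)) -> sum_f_R0 (fun k => mu (S k)) m <= Series (fun k => mu (S k)).
Proof.
  intros H1 H2. apply partial_le_Series. exact H2. intros k; apply H1; lia.
Qed.

Lemma reg1 a x mux K0r P b : 0 < a -> 1 <= ln (ln a) -> 1 <= x <= a -> 0 <= mux ->
  0 < b -> 0 < P ->
  (x <= K0r \/ mux <= (1 + 1/1000) * b * P / x ^ 2) ->
  mux * (/ ln (ln (a + x)) - / ln (ln a)) + / (a * ln a * ln (ln a) ^ 2) * (x * mux) <=
  (1 + 6 / ln a) / (ln a * ln (ln a) ^ 2) * (mux * (K0r ^ 2 / a ^ 2) + (1 + 1/1000) * b * P / a * / (2 * a + x)).
Proof.
  intros Ha Hl Hx Hm Hb HP Hc.
  assert (D := dterm a x Ha Hl ltac:(lra)).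
  set (L := ln a) in *. set (l := ln L) in *. set (u := ln (1 + x / a)) in *.
  assert (HL : 1 < L).
  { destruct (Rle_lt_dec L 1) as [h|h]; auto. exfalso.
    assert (l <= 0) by (unfold l; apply ln_nonpos; lra). lra. }
  set (s := x / a).
  assert (Hs : 0 < s <= 1).
  { unfold s. split. apply Rdiv_lt_0_compat; lra. apply (Rmult_le_reg_r a). lra. field_simplify; lra. }
  assert (Hu1 : 2 * s / (2 + s) <= u) by (apply ln1p_ge2; lra).
  assert (Hu2 : u <= s) by (apply ln1p_le; lra).
  assert (Hu0 : 0 <= u) by (assert (0 <= 2 * s / (2 + s)) by (apply Rdiv_le_0_compat; lra); lra).
  assert (HLl : 0 < L * l ^ 2) by (apply Rmult_lt_0_compat; nra).
  assert (K1 : s - u + 2 * u ^ 2 / L <= (1 + 6 / L) * (s ^ 2 / (2 + s))).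
  { assert (s - u <= s ^ 2 / (2 + s)).
    { replace (s ^ 2 / (2 + s)) with (s - 2 * s / (2 + s)) by (field; lra). lra. }
    assert (2 * u ^ 2 / L <= 6 / L * (s ^ 2 / (2 + s))).
    { apply (Rmult_le_reg_r (L * (2 + s))). nra.
      replace (2 * u ^ 2 / L * (L * (2 + s))) with (2 * u ^ 2 * (2 + s)) by (field; lra).
      replace (6 / L * (s ^ 2 / (2 + s)) * (L * (2 + s))) with (6 * s ^ 2) by (field; lra).
      assert (u ^ 2 <= s ^ 2) by (apply pow_incr; lra). nra. }
    lra. }
  assert (K2 : / ln (ln (a + x)) - / l + / (a * L * l ^ 2) * x <= (1 + 6 / L) / (L * l ^ 2) * (s ^ 2 / (2 + s))).
  { replace (/ (a * L * l ^ 2) * x) with (s / (L * l ^ 2)) by (unfold s; field; lra).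
    apply Rle_trans with ((s - u + 2 * u ^ 2 / L) / (L * l ^ 2)).
    { replace ((s - u + 2 * u ^ 2 / L) / (L * l ^ 2)) with (- (u - 2 * u ^ 2 / L) / (L * l ^ 2) + s / (L * l ^ 2)) by (field; lra).
      lra. }
    replace ((1 + 6 / L) / (L * l ^ 2) * (s ^ 2 / (2 + s))) with (((1 + 6 / L) * (s ^ 2 / (2 + s))) / (L * l ^ 2)) by (field; lra).
    unfold Rdiv. apply Rmult_le_compat_r. left; apply Rinv_0_lt_compat; lra. exact K1. }
  assert (K3 : mux * (s ^ 2 / (2 + s)) <= mux * (K0r ^ 2 / a ^ 2) + (1 + 1/1000) * b * P / a * / (2 * a + x)).
  { assert (T1 : 0 <= (1 + 1/1000) * b * P / a * / (2 * a + x)).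
    { apply Rmult_le_pos. apply Rdiv_le_0_compat; nra. left; apply Rinv_0_lt_compat; lra. }
    assert (T2 : 0 <= s ^ 2 / (2 + s)) by (apply Rdiv_le_0_compat; nra).
    destruct Hc as [Hc|Hc].
    - assert (s ^ 2 / (2 + s) <= K0r ^ 2 / a ^ 2).
      { apply Rle_trans with (s ^ 2). apply (Rmult_le_reg_r (2 + s)). lra.
        replace (s ^ 2 / (2 + s) * (2 + s)) with (s ^ 2) by (field; lra). nra.
        unfold s. replace ((x / a) ^ 2) with (x ^ 2 / a ^ 2) by (field; lra).
        unfold Rdiv. apply Rmult_le_compat_r. left; apply Rinv_0_lt_compat; nra.
        apply pow_incr; lra. }
      assert (mux * (s ^ 2 / (2 + s)) <= mux * (K0r ^ 2 / a ^ 2)) by (apply Rmult_le_compat_l; lra).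
      lra.
    - assert (mux * (s ^ 2 / (2 + s)) <= (1 + 1/1000) * b * P / x ^ 2 * (s ^ 2 / (2 + s))) by (apply Rmult_le_compat_r; lra).
      replace ((1 + 1/1000) * b * P / x ^ 2 * (s ^ 2 / (2 + s))) with ((1 + 1/1000) * b * P / a * / (2 * a + x)) in H by (unfold s; field; repeat split; lra).
      assert (0 <= mux * (K0r ^ 2 / a ^ 2)) by (apply Rmult_le_pos; [lra| apply Rdiv_le_0_compat; nra]).
      lra. }
  assert (K4 : mux * (/ ln (ln (a + x)) - / l + / (a * L * l ^ 2) * x) <= mux * ((1 + 6 / L) / (L * l ^ 2) * (s ^ 2 / (2 + s))))
    by (apply Rmult_le_compat_l; lra).
  assert (C0 : 0 <= (1 + 6 / L) / (L * l ^ 2)).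
  { apply Rdiv_le_0_compat. assert (0 <= 6 / L) by (apply Rdiv_le_0_compat; lra). lra. lra. }
  assert (K5 : (1 + 6 / L) / (L * l ^ 2) * (mux * (s ^ 2 / (2 + s))) <=
     (1 + 6 / L) / (L * l ^ 2) * (mux * (K0r ^ 2 / a ^ 2) + (1 + 1/1000) * b * P / a * / (2 * a + x)))
    by (apply Rmult_le_compat_l; lra).
  replace (mux * (/ ln (ln (a + x)) - / l) + / (a * L * l ^ 2) * (x * mux)) with
    (mux * (/ ln (ln (a + x)) - / l + / (a * L * l ^ 2) * x)) by ring.
  replace (mux * ((1 + 6 / L) / (L * l ^ 2) * (s ^ 2 / (2 + s)))) with
    ((1 + 6 / L) / (L * l ^ 2) * (mux * (s ^ 2 / (2 + s)))) in K4 by ring.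
  lra.
Qed.

Lemma reg2 a x mux P b : 0 < a -> 1 <= ln (ln a) -> 0 < x <= 1024 * a -> 2048 <= ln a ->
  0 < b -> 0 < P -> (1 - 1/1000) * b * P / x ^ 2 <= mux ->
  mux * (/ ln (ln (a + x)) - / ln (ln a)) <=
  - ((1 - 2048 / ln a) * (1 - 1/1000) * b * P / (ln a * ln (ln a) ^ 2)) * (ln (1 + x / a) / x ^ 2).
Proof.
  intros Ha Hl Hx HLa Hb HP Hm.
  assert (D := dterm a x Ha Hl ltac:(lra)).
  set (L := ln a) in *. set (l := ln L) in *. set (u := ln (1 + x / a)) in *.
  set (s := x / a).
  assert (Hs : 0 < s <= 1024).
  { unfold s. split. apply Rdiv_lt_0_compat; lra. apply (Rmult_le_reg_r a). lra. field_simplify; lra. }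
  assert (Hu2 : u <= s) by (apply ln1p_le; lra).
  assert (Hu0 : 0 <= u).
  { unfold u. rewrite <- ln_1. match goal with |- ?g => idtac g end. apply ln_le. lra. fold s. lra. }
  assert (HLl : 0 < L * l ^ 2) by (apply Rmult_lt_0_compat; nra).
  assert (Th : 0 <= 1 - 2048 / L).
  { assert (2048 / L <= 1) by (apply (Rmult_le_reg_r L); [lra|]; field_simplify; lra). lra. }
  assert (K1 : (1 - 2048 / L) * u <= u - 2 * u ^ 2 / L).
  { assert (2 * u ^ 2 / L <= 2048 / L * u).
    { apply (Rmult_le_reg_r L). lra.
      replace (2 * u ^ 2 / L * L) with (2 * u * u) by (field; lra).
      replace (2048 / L * u * L) with (2048 * u) by (field; lra). nra. }
    lra. }
  assert (K2 : / ln (ln (a + x)) - / l <= - ((1 - 2048 / L) * u) / (L * l ^ 2)).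
  { apply Rle_trans with (- (u - 2 * u ^ 2 / L) / (L * l ^ 2)). exact D.
    unfold Rdiv. apply Rmult_le_compat_r. left; apply Rinv_0_lt_compat; lra. lra. }
  assert (K3 : 0 <= (1 - 2048 / L) * u / (L * l ^ 2)).
  { apply Rdiv_le_0_compat. nra. lra. }
  assert (K4 : mux * (/ ln (ln (a + x)) - / l) <= mux * (- ((1 - 2048 / L) * u) / (L * l ^ 2))).
  { apply Rmult_le_compat_l. assert (0 <= (1 - 1/1000) * b * P / x ^ 2) by (apply Rdiv_le_0_compat; nra). lra. exact K2. }
  assert (K5 : (1 - 1/1000) * b * P / x ^ 2 * ((1 - 2048 / L) * u / (L * l ^ 2)) <= mux * ((1 - 2048 / L) * u / (L * l ^ 2)))
    by (apply Rmult_le_compat_r; lra).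
  replace (- ((1 - 2048 / L) * (1 - 1/1000) * b * P / (L * l ^ 2)) * (u / x ^ 2)) with
    (- ((1 - 1/1000) * b * P / x ^ 2 * ((1 - 2048 / L) * u / (L * l ^ 2)))) by (field; split; lra).
  replace (mux * (- ((1 - 2048 / L) * u) / (L * l ^ 2))) with (- (mux * ((1 - 2048 / L) * u / (L * l ^ 2)))) in K4 by (field; lra).
  lra.
Qed.


Theorem lemma5p2 (mu : nat -> R) (b alpha : R) :
  finite_measure_Npos mu ->
  0 < b -> 0 < alpha ->
  is_lim_seq (fun n => mu n / (b * Rpower (ln (INR n)) alpha / (INR n) ^ 2)) 1 ->
  forall eps : R, 0 < eps ->
  exists N : nat, forall n : nat, (N <= n)%nat ->
    Lf mu g_loglog n <=
      - Phi mu n / ((INR n + 10) * ln (INR n + 10) * (ln (ln (INR n + 10))) ^ 2)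
      - (2 * ln 2 - 1 / 2) * b * Rpower (ln (INR n)) (alpha - 1) / (ln (ln (INR n))) ^ 2
      + eps * (Rpower (ln (INR n)) (alpha - 1) / (ln (ln (INR n))) ^ 2).
Proof.
  intros [Hmu0 Hmus] Hb Hal Hlim eps Heps.
  apply is_lim_seq_spec in Hlim.
  destruct (Hlim (mkposreal (1/1000) ltac:(lra))) as [K1 HK1]. simpl in HK1.
  set (K0 := max K1 2).
  assert (HK0 : forall k, (K0 <= k)%nat ->
     (1 - 1/1000) * (b * Rpower (ln (INR k)) alpha / INR k ^ 2) <= mu k <=
     (1 + 1/1000) * (b * Rpower (ln (INR k)) alpha / INR k ^ 2)).
  { intros k Hk. assert (Hk1 := HK1 k ltac:(lia)).
    replace (INR k * (INR k * 1)) with (INR k ^ 2) in Hk1 by ring.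
    assert (Hk2 : 2 <= INR k) by (replace 2 with (INR 2) by (simpl; ring); apply le_INR; lia).
    assert (0 < ln (INR k)) by (rewrite <- ln_1; apply ln_increasing; lra).
    assert (0 < Rpower (ln (INR k)) alpha) by (unfold Rpower; apply exp_pos).
    set (B := b * Rpower (ln (INR k)) alpha / INR k ^ 2) in *.
    assert (HB : 0 < B) by (unfold B; apply Rdiv_lt_0_compat; nra).
    apply Rabs_def2 in Hk1. destruct Hk1 as [h1 h2].
    assert (E : mu k = (mu k / B) * B) by (field; lra).
    set (q := mu k / B) in *. rewrite E.
    split; apply Rmult_le_compat_r; lra. }
  set (Mt := Series (fun k => mu (S k))).
  assert (HMt : 0 <= Mt).
  { apply Rle_trans with (sum_f_R0 (fun k => mu (S k)) 0). simpl. apply Hmu0; lia.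
    apply mu_pos_sum; auto. }
  set (K0M := INR K0 ^ 2 * Mt).
  assert (HK0M : 0 <= K0M) by (unfold K0M; pose proof (pos_INR K0); nra).
  destruct (nat_large (Rmax (Rmax 10000000 (exp 2048000)) (Rmax (1000 * K0M / b) (INR K0)))) as [N HN].
  exists N. intros n Hn.
  assert (HnN : INR N <= INR n) by (apply le_INR; exact Hn).
  pose proof (Rmax_l (Rmax 10000000 (exp 2048000)) (Rmax (1000 * K0M / b) (INR K0))) as X1.
  pose proof (Rmax_r (Rmax 10000000 (exp 2048000)) (Rmax (1000 * K0M / b) (INR K0))) as X2.
  pose proof (Rmax_l 10000000 (exp 2048000)) as X3.
  pose proof (Rmax_r 10000000 (exp 2048000)) as X4.
  pose proof (Rmax_l (1000 * K0M / b) (INR K0)) as X5.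
  pose proof (Rmax_r (1000 * K0M / b) (INR K0)) as X6.
  set (nr := INR n) in *.
  assert (Hn7 : 10000000 <= nr) by lra.
  assert (Hnexp : exp 2048000 <= nr) by lra.
  assert (HnK0M : 1000 * K0M / b <= nr) by lra.
  assert (HnK0 : (K0 <= n)%nat) by (apply INR_le; fold nr; lra).
  assert (Hn1 : (1 <= n)%nat) by (apply INR_le; fold nr; simpl; lra).
  clear X1 X2 X3 X4 X5 X6 HN.
  set (a := nr + 10).
  set (L := ln a). set (l := ln L). set (Ln := ln nr). set (lam := ln Ln).
  set (P := Rpower Ln alpha).
  assert (Ha0 : 0 < a) by (unfold a; lra).
  assert (HLn : 2048000 <= Ln).
  { unfold Ln. rewrite <- (ln_exp 2048000). apply ln_le. apply exp_pos. exact Hnexp. }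
  assert (HLLn : Ln <= L) by (unfold Ln, L, a; apply ln_le; lra).
  assert (HLup : L <= (1 + 1/1000) * Ln).
  { assert (E : L = Ln + ln (1 + 10 / nr)).
    { unfold L, Ln, a. rewrite <- ln_mult by (try lra; assert (0 < 10/nr) by (apply Rdiv_lt_0_compat; lra); lra).
      f_equal. field. lra. }
    assert (ln (1 + 10 / nr) <= 10 / nr) by (apply ln1p_le; assert (0 < 10/nr) by (apply Rdiv_lt_0_compat; lra); lra).
    assert (10 / nr <= 1) by (apply (Rmult_le_reg_r nr); [lra|]; field_simplify; lra).
    lra. }
  assert (Hlam : 1 <= lam).
  { unfold lam. rewrite <- (ln_exp 1). apply ln_le. apply exp_pos. pose proof exp_le_3. lra. }
  assert (Hll : lam <= l) by (unfold lam, l; apply ln_le; lra).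
  assert (Hlup : l <= (1 + 1/1000) * lam).
  { assert (l <= ln ((1 + 1/1000) * Ln)) by (unfold l; apply ln_le; lra).
    rewrite ln_mult in H by lra. fold lam in H.
    assert (ln (1 + 1/1000) <= 1/1000) by (apply ln1p_le; lra). lra. }
  assert (HP : 1 <= P).
  { unfold P. rewrite <- (Rpower_O Ln) by lra. apply Rle_Rpower; lra. }
  assert (HK0Ma : K0M <= 1/1000 * b * a).
  { assert (K0M <= nr * b / 1000).
    { apply (Rmult_le_reg_r (1000 / b)). apply Rdiv_lt_0_compat; lra.
      replace (nr * b / 1000 * (1000 / b)) with nr by (field; lra).
      replace (K0M * (1000 / b)) with (1000 * K0M / b) by (field; lra). exact HnK0M. }
    unfold a. nra. }
  assert (HFn : 2 * (ln 2 - 10 / nr) / a <= Fa a nr).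
  { unfold Fa.
    assert (h1 : 0 < nr / a) by (apply Rdiv_lt_0_compat; lra).
    assert (h2 : nr / a <= a / nr).
    { apply (Rmult_le_reg_r (a * nr)). nra.
      replace (nr / a * (a * nr)) with (nr * nr) by (field; lra).
      replace (a / nr * (a * nr)) with (a * a) by (field; lra). unfold a. nra. }
    assert (h3 : ln (1 + nr / a) <= ln (1 + a / nr)) by (apply ln_le; lra).
    assert (h4 : ln 2 - 10 / nr <= ln (1 + nr / a)).
    { assert (E : ln (1 + nr / a) = ln 2 + ln ((a + nr) / (2 * a))).
      { rewrite <- ln_mult by (try lra; apply Rdiv_lt_0_compat; lra). f_equal. field. lra. }
      assert (H := ln_ge_inv ((a + nr) / (2 * a)) ltac:(apply Rdiv_lt_0_compat; lra)).
      replace (1 - / ((a + nr) / (2 * a))) with (- (10 / (a + nr))) in H by (unfold a; field; lra).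
      assert (10 / (a + nr) <= 10 / nr).
      { apply Rmult_le_compat_l. lra. apply Rinv_le_contravar; unfold a; lra. }
      lra. }
    assert (h5 : 0 <= ln (1 + nr / a)) by (rewrite <- ln_1; apply ln_le; lra).
    assert (h6 : / a <= / nr) by (apply Rinv_le_contravar; unfold a; lra).
    assert (h7 : ln (1 + nr / a) / a <= ln (1 + nr / a) / nr) by (apply Rmult_le_compat_l; lra).
    assert (h8 : / a * ln (1 + nr / a) <= / a * ln (1 + a / nr)).
    { apply Rmult_le_compat_l. left; apply Rinv_0_lt_compat; lra. exact h3. }
    assert (h9 : 2 * (ln 2 - 10 / nr) / a <= 2 * ln (1 + nr / a) / a).
    { unfold Rdiv. apply Rmult_le_compat_r. left; apply Rinv_0_lt_compat; lra. lra. }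
    unfold Rdiv in *. lra. }
  set (J := (1023 * n)%nat).
  assert (HJ : nr + 1 + INR (J - 1) = 1024 * nr).
  { unfold J. rewrite minus_INR by lia. rewrite mult_INR. fold nr. simpl INR. ring. }
  assert (HFK : Fa a (nr + 1 + INR (J - 1)) <= 12 / (1024 * nr)).
  { rewrite HJ. unfold Fa.
    assert (h1 : ln (1 + 1024 * nr / a) <= 11).
    { apply Rle_trans with (ln 1025). apply ln_le.
      assert (0 < 1024 * nr / a) by (apply Rdiv_lt_0_compat; lra). lra.
      assert (1024 * nr / a <= 1024). { apply (Rmult_le_reg_r a). lra. field_simplify; unfold a; lra. }
      lra. apply ln1025_le. }
    assert (h2 : ln (1 + a / (1024 * nr)) <= a / (1024 * nr)).
    { apply ln1p_le. assert (0 < a / (1024 * nr)) by (apply Rdiv_lt_0_compat; lra). lra. }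
    assert (h3 : ln (1 + 1024 * nr / a) / (1024 * nr) <= 11 / (1024 * nr)).
    { unfold Rdiv. apply Rmult_le_compat_r. left; apply Rinv_0_lt_compat; lra. exact h1. }
    assert (h4 : / a * ln (1 + a / (1024 * nr)) <= / a * (a / (1024 * nr))).
    { apply Rmult_le_compat_l. left; apply Rinv_0_lt_compat; lra. exact h2. }
    replace (/ a * (a / (1024 * nr))) with (1 / (1024 * nr)) in h4 by (field; lra).
    replace (12 / (1024 * nr)) with (11 / (1024 * nr) + 1 / (1024 * nr)) by (field; lra).
    lra. }
  pose proof ln2_lt_1 as Hl2a. pose proof ln_lt_2 as Hl2b.
  unfold Lf, Phi. fold nr.
  set (t := fun k => mu (S k) * (g_loglog (n + S k) - g_loglog n)).
  assert (Hgn : g_loglog n = / l) by reflexivity.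
  assert (Hgk : forall k, g_loglog (n + S k) = / ln (ln (a + INR (S k)))).
  { intros k. unfold g_loglog. rewrite plus_INR. fold nr. unfold a. f_equal. f_equal. f_equal. ring. }
  assert (Hl0 : 0 < l) by lra.
  assert (Ht0 : forall k, t k <= 0 /\ Rabs (t k) <= mu (S k) * / l).
  { intros k. unfold t. rewrite Hgk, Hgn.
    pose proof (pos_INR (S k)).
    assert (h1 : / ln (ln (a + INR (S k))) <= / ln (ln a)) by (apply g_mono; unfold a; lra).
    assert (h2 : 0 < ln (ln (a + INR (S k)))) by (apply lnln_pos; unfold a; lra).
    assert (h3 : 0 < / ln (ln (a + INR (S k)))) by (apply Rinv_0_lt_compat; lra).
    fold L l in h1.
    assert (h4 : 0 <= mu (S k)) by (apply Hmu0; lia).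
    split.
    - assert (mu (S k) * (/ ln (ln (a + INR (S k))) - / l) <= mu (S k) * 0) by (apply Rmult_le_compat_l; lra). lra.
    - rewrite Rabs_mult, Rabs_right by lra. apply Rmult_le_compat_l. lra.
      rewrite Rabs_left1 by lra. lra. }
  assert (Htex : ex_series t).
  { apply (ex_series_le t (fun k => mu (S k) * / l)). intros k. apply (Ht0 k).
    apply ex_series_scal_r. exact Hmus. }
  assert (Hstep1 : Series t <= sum_f_R0 t (n + J - 1)).
  { apply Series_le_partial. exact Htex. intros k; apply (Ht0 k). }
  assert (Hsplit : sum_f_R0 t (n + J - 1) = sum_f_R0 t (n - 1) + sum_f_R0 (fun i => t (n + i)%nat) (J - 1)).
  { rewrite (tech2 t (n - 1) (n + J - 1)) by (unfold J; lia).
    replace (S (n - 1)) with n by lia. replace (n + J - 1 - n)%nat with (J - 1)%nat by lia. reflexivity. }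
  assert (HPhi : sum_f_R0 (fun k => INR k * mu k) n = sum_f_R0 (fun i => INR (S i) * mu (S i)) (n - 1)).
  { rewrite decomp_sum by lia. simpl INR at 1. replace (pred n) with (n - 1)%nat by lia. ring. }
  assert (Hlge1 : 1 <= ln (ln a)) by (fold L l; lra).
  assert (HP0 : 0 < P) by lra.
  set (G := / (a * L * l ^ 2)).
  set (C1 := (1 + 6 / L) / (L * l ^ 2)).
  assert (HR1 : sum_f_R0 t (n - 1) + G * sum_f_R0 (fun i => INR (S i) * mu (S i)) (n - 1) <=
     C1 * (K0M / a ^ 2 + (1 + 1/1000) * b * P / a * (45/100))).
  { rewrite scal_sum, <- plus_sum.
    apply Rle_trans with (sum_f_R0 (fun i => C1 * (mu (S i) * (INR K0 ^ 2 / a ^ 2) + (1 + 1/1000) * b * P / a * / (2 * a + INR (S i)))) (n - 1)).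
    { apply sum_Rle. intros i Hi. unfold t. rewrite Hgk, Hgn.
      assert (Hx1 : 1 <= INR (S i)) by (rewrite S_INR; pose proof (pos_INR i); lra).
      assert (Hx2 : INR (S i) <= nr) by (apply le_INR; lia).
      assert (Hm : 0 <= mu (S i)) by (apply Hmu0; lia).
      assert (HC : INR (S i) <= INR K0 \/ mu (S i) <= (1 + 1/1000) * b * P / INR (S i) ^ 2).
      { destruct (Compare_dec.le_lt_dec K0 (S i)) as [h|h].
        - right. destruct (HK0 (S i) h) as [_ h2].
          assert (Rpower (ln (INR (S i))) alpha <= P).
          { unfold P. apply Rle_Rpower_l. lra. split.
            rewrite <- ln_1. apply ln_increasing. lra.
            assert (2 <= INR (S i)) by (replace 2 with (INR 2) by (simpl; ring); apply le_INR; unfold K0 in h; lia). lra.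
            unfold Ln. apply ln_le; lra. }
          apply Rle_trans with (1 := h2).
          replace ((1 + 1/1000) * (b * Rpower (ln (INR (S i))) alpha / INR (S i) ^ 2)) with
            ((1 + 1/1000) * b / INR (S i) ^ 2 * Rpower (ln (INR (S i))) alpha) by (field; lra).
          replace ((1 + 1/1000) * b * P / INR (S i) ^ 2) with ((1 + 1/1000) * b / INR (S i) ^ 2 * P) by (field; lra).
          apply Rmult_le_compat_l. apply Rdiv_le_0_compat; nra. exact H.
        - left. apply le_INR. lia. }
      assert (R := reg1 a (INR (S i)) (mu (S i)) (INR K0) P b Ha0 Hlge1 ltac:(unfold a; lra) Hm Hb HP0 HC).
      fold L l in R. fold G in R. fold C1 in R. rewrite Rmult_comm in R. lra. }
    assert (E0 : sum_f_R0 (fun i => C1 * (mu (S i) * (INR K0 ^ 2 / a ^ 2) + (1 + 1/1000) * b * P / a * / (2 * a + INR (S i)))) (n - 1) =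
      C1 * sum_f_R0 (fun i => mu (S i) * (INR K0 ^ 2 / a ^ 2) + (1 + 1/1000) * b * P / a * / (2 * a + INR (S i))) (n - 1))
      by (rewrite scal_sum; apply sum_eq; intros; ring).
    rewrite E0. apply Rmult_le_compat_l.
    { unfold C1. apply Rdiv_le_0_compat. assert (0 <= 6 / L) by (apply Rdiv_le_0_compat; lra). lra. nra. }
    rewrite plus_sum.
    assert (E1 : sum_f_R0 (fun i => mu (S i) * (INR K0 ^ 2 / a ^ 2)) (n - 1) = INR K0 ^ 2 / a ^ 2 * sum_f_R0 (fun i => mu (S i)) (n - 1)).
    { rewrite scal_sum. reflexivity. }
    assert (E2 : sum_f_R0 (fun i => (1 + 1/1000) * b * P / a * / (2 * a + INR (S i))) (n - 1) =
       (1 + 1/1000) * b * P / a * sum_f_R0 (fun i => / (2 * a + INR (S i))) (n - 1)).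
    { rewrite scal_sum. apply sum_eq. intros; ring. }
    rewrite E1, E2.
    assert (Q1 : sum_f_R0 (fun i => mu (S i)) (n - 1) <= Mt) by (apply mu_pos_sum; auto).
    assert (Q2 : sum_f_R0 (fun i => / (2 * a + INR (S i))) (n - 1) <= 45/100).
    { apply Rle_trans with (ln (2 * a + INR (S (n - 1))) - ln (2 * a)). apply sum_inv_ln; lra.
      replace (S (n - 1)) with n by lia. fold nr.
      replace (ln (2 * a + nr) - ln (2 * a)) with (ln ((2 * a + nr) / (2 * a))).
      apply Rle_trans with (ln (3/2)). apply ln_le. apply Rdiv_lt_0_compat; lra.
      apply (Rmult_le_reg_r (2 * a)). lra. field_simplify; unfold a; lra. apply ln32_le.
      unfold Rdiv. rewrite ln_mult, ln_Rinv; try ring; try lra; apply Rinv_0_lt_compat; lra. }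
    assert (0 <= INR K0 ^ 2 / a ^ 2) by (apply Rdiv_le_0_compat; nra).
    assert (0 <= (1 + 1/1000) * b * P / a) by (apply Rdiv_le_0_compat; nra).
    assert (INR K0 ^ 2 / a ^ 2 * sum_f_R0 (fun i => mu (S i)) (n - 1) <= K0M / a ^ 2).
    { replace (K0M / a ^ 2) with (INR K0 ^ 2 / a ^ 2 * Mt) by (unfold K0M; field; lra). apply Rmult_le_compat_l; lra. }
    assert ((1 + 1/1000) * b * P / a * sum_f_R0 (fun i => / (2 * a + INR (S i))) (n - 1) <= (1 + 1/1000) * b * P / a * (45/100))
      by (apply Rmult_le_compat_l; lra).
    lra. }
  set (Th := (1 - 2048 / L) * (1 - 1/1000) * b * P / (L * l ^ 2)).
  assert (HTh : 0 <= Th).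
  { unfold Th. apply Rdiv_le_0_compat.
    assert (0 <= 1 - 2048 / L) by (assert (2048 / L <= 1) by (apply (Rmult_le_reg_r L); [lra|]; field_simplify; lra); lra).
    assert (0 < b * P) by nra. nra. nra. }
  assert (HR2 : sum_f_R0 (fun i => t (n + i)%nat) (J - 1) <= - Th * (nr / (nr + 1) * (Fa a nr - Fa a (nr + 1 + INR (J - 1))))).
  { apply Rle_trans with (sum_f_R0 (fun i => - Th * (ln (1 + (nr + 1 + INR i) / a) / (nr + 1 + INR i) ^ 2)) (J - 1)).
    { apply sum_Rle. intros i Hi. unfold t. rewrite Hgk, Hgn.
      replace (INR (S (n + i))) with (nr + 1 + INR i) by (rewrite S_INR, plus_INR; fold nr; ring).
      pose proof (pos_INR i).
      assert (Hi2 : INR i <= INR (J - 1)) by (apply le_INR; exact Hi).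
      assert (Hm : (1 - 1/1000) * b * P / (nr + 1 + INR i) ^ 2 <= mu (S (n + i))).
      { destruct (HK0 (S (n + i)) ltac:(lia)) as [h1 _].
        replace (INR (S (n + i))) with (nr + 1 + INR i) in h1 by (rewrite S_INR, plus_INR; fold nr; ring).
        assert (P <= Rpower (ln (nr + 1 + INR i)) alpha).
        { unfold P. apply Rle_Rpower_l. lra. split. lra. unfold Ln. apply ln_le; lra. }
        apply Rle_trans with (2 := h1).
        replace ((1 - 1/1000) * (b * Rpower (ln (nr + 1 + INR i)) alpha / (nr + 1 + INR i) ^ 2)) with
          ((1 - 1/1000) * b / (nr + 1 + INR i) ^ 2 * Rpower (ln (nr + 1 + INR i)) alpha) by (field; lra).
        replace ((1 - 1/1000) * b * P / (nr + 1 + INR i) ^ 2) with ((1 - 1/1000) * b / (nr + 1 + INR i) ^ 2 * P) by (field; lra).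
        apply Rmult_le_compat_l. apply Rdiv_le_0_compat; nra. exact H0. }
      assert (R := reg2 a (nr + 1 + INR i) (mu (S (n + i))) P b Ha0 Hlge1 ltac:(unfold a; lra) ltac:(fold L; lra) Hb HP0 Hm).
      fold L l in R. unfold Th. exact R. }
    assert (E : sum_f_R0 (fun i => - Th * (ln (1 + (nr + 1 + INR i) / a) / (nr + 1 + INR i) ^ 2)) (J - 1) =
      - Th * sum_f_R0 (fun i => ln (1 + (nr + 1 + INR i) / a) / (nr + 1 + INR i) ^ 2) (J - 1)).
    { rewrite scal_sum. apply sum_eq; intros; ring. }
    rewrite E.
    assert (SL := sum_lb a nr (J - 1) Ha0 ltac:(lra)).
    assert (Th * (nr / (nr + 1) * (Fa a nr - Fa a (nr + 1 + INR (J - 1)))) <=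
       Th * sum_f_R0 (fun i => ln (1 + (nr + 1 + INR i) / a) / (nr + 1 + INR i) ^ 2) (J - 1)) by (apply Rmult_le_compat_l; lra).
    lra. }
  assert (FI := final_ineq nr a L l Ln lam P b K0M (Fa a nr) (Fa a (nr + 1 + INR (J - 1))) (ln 2)
     Hn7 eq_refl ltac:(lra) ltac:(lra) HLup Hlam ltac:(lra) Hlup HP Hb HK0M HK0Ma HFn HFK ltac:(lra) Hl2a).
  assert (HQ : Rpower Ln (alpha - 1) = P / Ln).
  { unfold P, Rminus. rewrite Rpower_plus, Rpower_Ropp, Rpower_1 by lra. reflexivity. }
  rewrite HQ, HPhi.
  assert (Hnr0 : 0 <= nr) by lra.
  assert (S1 : nr * Series t <= nr * (sum_f_R0 t (n - 1) + sum_f_R0 (fun i => t (n + i)%nat) (J - 1))).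
  { rewrite <- Hsplit. apply Rmult_le_compat_l; lra. }
  set (Sp := sum_f_R0 (fun i => INR (S i) * mu (S i)) (n - 1)) in *.
  set (X := K0M / a ^ 2 + (1 + 1/1000) * b * P / a * (45/100)) in *.
  set (Y := nr / (nr + 1) * (Fa a nr - Fa a (nr + 1 + INR (J - 1)))) in *.
  assert (E1 : nr / (L * l ^ 2) * ((1 + 6 / L) * X - (1 - 2048 / L) * (1 - 1/1000) * b * P * (nr / (nr + 1)) * (Fa a nr - Fa a (nr + 1 + INR (J - 1))))
     = nr * (C1 * X - Th * Y)).
  { unfold C1, Th, Y. field. split; nra. }
  rewrite E1 in FI.
  assert (E2 : - (nr * Sp) / (a * L * l ^ 2) = - (nr * (G * Sp))) by (unfold G; field; repeat split; nra).
  rewrite E2.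
  assert (S2 : nr * (sum_f_R0 t (n - 1) + sum_f_R0 (fun i => t (n + i)%nat) (J - 1)) + nr * (G * Sp) <= nr * (C1 * X - Th * Y)).
  { rewrite <- Rmult_plus_distr_l. apply Rmult_le_compat_l. lra. lra. }
  assert (E3 : (2 * ln 2 - 1 / 2) * b * (P / Ln) / lam ^ 2 = - (- (2 * ln 2 - 1 / 2) * b * P / Ln / lam ^ 2))
    by (field; split; lra).

  assert (0 <= eps * (P / Ln / lam ^ 2)).
  { apply Rmult_le_pos. lra. apply Rdiv_le_0_compat. apply Rdiv_le_0_compat; lra. nra. }
  lra.
Qed.
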